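(* Let $p$ be an odd prime and let $G$ be a finite $p$-group with cyclic derived subgroup $G'$. Then every conjugacy class of $G$ is a coset $Kg$ of some subgroup $K\subseteq G'$. *)

(* Defs.v *)
From mathcomp Require Import all_boot all_fingroup all_solvable.

(* Main.v *)
Require Import Defs.
From mathcomp Require Import all_boot all_fingroup all_solvable.
From mathcomp Require Import zify.
Set Implicit Arguments. Unset Strict Implicit.

Fixpoint ssum (r j : nat) : nat := if j is j'.+1 then 1 + r * ssum r j' else 0.

Lemma ssum_modp p t j : exists a, ssum (1 + p * t) j = j + p * a.
Proof.
elim: j => [|j [a IH]]; first by exists 0; rewrite /= muln0.
exists (a + t * j + p * t * a); rewrite /= IH; nia.
Qed.

Lemma ssum_sq p t j : exists b, ssum (1 + p * t) j = j + p * t * 'C(j, 2) + p * p * b.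
Proof.
elim: j => [|j [b IH]]; first by exists 0; rewrite /= !muln0.
exists (b + t * t * 'C(j,2) + p * t * b); rewrite /= IH binS bin1; nia.
Qed.

Lemma ssum_p p t : prime p -> odd p -> exists m, ssum (1 + p * t) p = p * m /\ coprime m p.
Proof.
move=> pp op; have [b ->] := ssum_sq p t p.
rewrite bin2odd //.
exists (1 + p * (t * p.-1./2 + b)); split; first nia.
rewrite -coprime_modl addnC.
rewrite mulnC modnMDl modn_small ?prime_gt1 //. exact: coprime1n.
Qed.

Local Open Scope group_scope.

Lemma commX_ssum (gT : finGroupType) (x g : gT) r :
  [~ x, g] ^ g = [~ x, g] ^+ r -> forall j, [~ x, g ^+ j] = [~ x, g] ^+ ssum r j.
Proof.
move=> ur; elim=> [|j IH]; first by rewrite expg0 commg1.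
by rewrite expgSr commgMJ IH conjXg ur -expgM /= add1n expgS.
Qed.

Lemma fermat_pow r p b : prime p -> r ^ (p ^ b) = r %[mod p].
Proof.
move=> pp; elim: b => [|b IH]; first by rewrite expn1.
by rewrite expnSr expnM -modnXm IH modnXm fermat_little.
Qed.

Lemma conj_one_mod (gT : finGroupType) (G : {group gT}) p a w :
  prime p -> p.-group G -> cyclic G^`(1) -> a \in G -> w \in G^`(1) ->
  exists t, w ^ a = w ^+ (1 + p * t).
Proof.
move=> pp pG cG aG wG.
have nW : a \in 'N(<[w]>).
  have chW : <[w]> \char G.
    apply: char_trans (der_char 1 G).
    by rewrite sub_cyclic_char // cycle_subG.
  exact: subsetP (normal_norm (char_normal chW)) a aG.
have /cycleP[r Er] : w ^ a \in <[w]> by rewrite memJ_norm ?cycle_id.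
have G'G : G^`(1) \subset G by apply: der_sub.
have [e oW] := p_natP (mem_p_elt pG (subsetP G'G w wG)).
have [b oA] := p_natP (mem_p_elt pG aG).
case: e oW => [|e] oW.
  have w1 : w = 1 by apply/eqP; rewrite -order_eq1 oW.
  by exists 0; rewrite w1 conj1g expg1n.
have Ek : forall k, w ^ (a ^+ k) = w ^+ (r ^ k).
  elim=> [|k IH]; first by rewrite conjg1 expn0 expg1.
  by rewrite expgSr conjgM IH conjXg Er -expgM expnSr mulnC.
have : w ^+ (r ^ #[a]) == w ^+ 1 by rewrite -Ek expg_order conjg1 expg1.
rewrite eq_expg_mod_order oW => /eqP Hm.
have Hp : (r %% p = 1)%N.
  have Hd : p %| p ^ e.+1 by rewrite expnS dvdn_mulr.
  have := congr1 (modn^~ p) Hm => /=.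
  rewrite !(modn_dvdm _ Hd).
  rewrite oA fermat_pow //.
  by rewrite (modn_small (prime_gt1 pp)).
exists (r %/ p); rewrite Er; congr (w ^+ _).
by rewrite {1}(divn_eq r p) Hp addnC mulnC.
Qed.

Theorem mainTheorem4 (gT : finGroupType) (G : {group gT}) (p : nat) :
  prime p -> odd p -> p.-group G -> cyclic G^`(1) ->
  forall x, x \in G ->
    exists (K : {group gT}) (g : gT), K \subset G^`(1) /\ x ^: G = K :* g.
Proof.
move=> pp op pG cG x xG.
have G'G : G^`(1) \subset G by apply: der_sub.
have cG' : forall g, g \in G -> [~ x, g] \in G^`(1).
  by move=> g gG; rewrite derg1 mem_commg.
have pel : forall y, y \in G^`(1) -> {k | #[y] = (p ^ k)%N}.
  by move=> y yG; apply: p_natP (mem_p_elt pG (subsetP G'G y yG)).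
have [g0 g0G maxg0] : exists2 g0, g0 \in G &
    forall g, g \in G -> #[[~ x, g]] <= #[[~ x, g0]].
  case: (@arg_maxnP _ 1 (mem G) (fun g => #[[~ x, g]]) (group1 G)) => g0 g0G H.
  by exists g0.
set u := [~ x, g0].
have Ssub : forall g, g \in G -> [~ x, g] \in <[u]>.
  move=> g gG; rewrite -cycle_subG -(cardSg_cyclic cG) ?cycle_subG ?cG' //.
  rewrite -!orderE.
  have [k1 E1] := pel _ (cG' g gG); have [k2 E2] := pel _ (cG' g0 g0G).
  rewrite E1 E2 dvdn_exp2l // -(leq_exp2l _ _ (prime_gt1 pp)) -E1 -E2.
  exact: maxg0.
pose w i := [~ x, g0 ^+ (p ^ i)].
have wG : forall i, w i \in G^`(1) by move=> i; rewrite cG' ?groupX.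
have LB : forall i, w i ^+ p \in <[w i.+1]>.
  move=> i; have g1G : g0 ^+ (p ^ i) \in G by rewrite groupX.
  have [t Et] := conj_one_mod pp pG cG g1G (wG i).
  have [m [Em cm]] := ssum_p t pp op.
  have -> : w i.+1 = (w i ^+ p) ^+ m.
    by rewrite /w expnSr expgM (commX_ssum Et) Em expgM.
  have [k Ek] := pel _ (groupX p (wG i)).
  have : generator <[w i ^+ p]> ((w i ^+ p) ^+ m).
    by rewrite generator_coprime Ek coprimeXl // coprime_sym.
  by move/eqP <-; apply: cycle_id.
have LC : forall i k, exists h, h \in G /\ [~ x, h]^-1 * u ^+ k \in <[w i]>.
  elim=> [|i IH] k.
    by exists 1; rewrite group1 commg1 invg1 mul1g /w expn0 expg1 mem_cycle.
  have [h [hG /cycleP[c Ec]]] := IH k.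
  have g1G : g0 ^+ (p ^ i) \in G by rewrite groupX.
  have [t Et] := conj_one_mod pp pG cG g1G (wG i).
  have [rho Er] := conj_one_mod pp pG cG hG (wG i).
  have [a Ea] := ssum_modp p t c.
  exists ((g0 ^+ (p ^ i)) ^+ c * h); split; first by rewrite groupM ?groupX.
  rewrite commgMJ (commX_ssum Et) Ea conjXg Er -expgM.
  have -> : ((1 + p * rho) * (c + p * a) = c + p * (a + rho * c + p * rho * a))%N.
    nia.
  rewrite expgD invMg -mulgA Ec invMg -mulgA mulVg mulg1.
  by rewrite groupV expgM groupX.
have [b Eb] : {b | #[g0] = (p ^ b)%N} by apply: p_natP (mem_p_elt pG g0G).
have Sall : forall k, exists2 h, h \in G & u ^+ k = [~ x, h].
  move=> k; have [h [hG]] := LC b k.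
  rewrite /w -Eb expg_order commg1.
  case/cycleP=> n; rewrite expg1n => E.
  by exists h => //; rewrite -(mulKVg [~ x, h] (u ^+ k)) E mulg1.
have uG : u \in G^`(1) by apply: cG'.
have nK : x \in 'N(<[u]>).
  have chW : <[u]> \char G.
    apply: char_trans (der_char 1 G).
    by rewrite sub_cyclic_char // cycle_subG.
  exact: subsetP (normal_norm (char_normal chW)) x xG.
exists <[u]>%G, x; split; first by rewrite cycle_subG.
apply/setP => y; rewrite mem_rcoset; apply/imsetP/idP.
  case=> g gG ->; rewrite conjg_mulR.
  have -> : x * [~ x, g] * x^-1 = [~ x, g] ^ x^-1.
   by rewrite conjgE invgK -mulgA.
  rewrite memJ_norm ?groupV //.
  exact: Ssub.
move=> yK; have : x^-1 * y \in <[u]>.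
  by rewrite -(memJ_norm _ nK) in yK; rewrite conjgE mulgKV in yK.
case/cycleP=> k Ek; have [h hG Eh] := Sall k.
by exists h => //; rewrite conjg_mulR -Eh -Ek mulKVg.
Qed.
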